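(* Let $h_1,\dots,h_N\in\mathbb{C}$. Define $|h_{IDEAL}| = \max\{ |\sum_{i=1}^N b_i h_i| : b_i\in\mathbb{C},\ |b_i|\le 1\}$ and $|h_{REAL}| = \max\{ |\sum_{i=1}^N b_i h_i| : b_i \in\{0,1\}\}$. Then $|h_{REAL}| \ge \frac{|h_{IDEAL}|}{\pi}$.
   Context: Here $h_i$ is the (complex) channel contribution of the $i$-th element of a passive reflecting surface; $h_{IDEAL}$ corresponds to elements whose complex reflection coefficient can be set arbitrarily with magnitude at most $1$, and $h_{REAL}$ to elements restricted to two states (off $=0$, on $=1$). The direct-path term is not included. *)

(* Defs.v *)
From HB Require Import structures.
From mathcomp Require Import all_boot all_order all_algebra.
From mathcomp Require Import all_classical all_reals all_analysis.
From mathcomp Require Import complex.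
Set Implicit Arguments. Unset Strict Implicit. Unset Printing Implicit Defensive.
Import Order.TTheory GRing.Theory Num.Theory.
Local Open Scope ring_scope.
Local Open Scope classical_set_scope.

Definition cmod (R : realType) (z : R[i]) : R := Normc.normc z.

(* |h_IDEAL| = max { |sum_i b_i h_i| : b_i in C, |b_i| <= 1 } (as a supremum; it is attained) *)
Definition h_ideal (R : realType) (N : nat) (h : 'I_N -> R[i]) : R :=
  sup [set cmod (\sum_(i < N) b i * h i) |
         b in [set b : 'I_N -> R[i] | forall i, cmod (b i) <= 1]].

(* |h_REAL| = max { |sum_i b_i h_i| : b_i in {0,1} } (finite max; values are >= 0) *)
Definition h_real (R : realType) (N : nat) (h : 'I_N -> R[i]) : R :=
  \big[Num.max/0]_(b : {ffun 'I_N -> bool})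
     cmod (\sum_(i < N) (b i)%:R * h i).

(* Main.v *)
Require Import Defs.
From HB Require Import structures.
From mathcomp Require Import all_boot all_order all_algebra.
From mathcomp Require Import all_classical all_reals all_analysis.
From mathcomp Require Import complex.
From mathcomp Require Import ring lra.
Import Order.TTheory GRing.Theory Num.Theory.
Import numFieldNormedType.Exports.
Set Implicit Arguments. Unset Strict Implicit. Unset Printing Implicit Defensive.
Local Open Scope ring_scope.
Local Notation Re := complex.Re.
Local Notation Im := complex.Im.

Section Trig.
Variable R : realType.

Lemma sin_le_id (x : R) : 0 <= x -> sin x <= x.
Proof.
move=> hx.
have [] := @MVT_segment R sin cos 0 x hx (fun c _ => is_derive_sin c).
  by apply/continuous_subspaceT => ?; exact: continuous_sin.
move=> c cI h.
rewrite sin0 !subr0 in h; rewrite h.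
have := cos_le1 c; nra.
Qed.

Lemma one_cos_le (t : R) : 0 <= t -> 1 - cos t <= t ^+ 2.
Proof.
move=> ht.
have [] := @MVT_segment R cos (fun x => - sin x) 0 t ht (fun c _ => is_derive_cos c).
  by apply/continuous_subspaceT => ?; exact: continuous_cos.
move=> c cI h.
rewrite cos0 subr0 in h.
move: cI; rewrite in_itv /= => /andP[c0 ct].
have := sin_le_id c0.
have := sin_geN1 c.
nra.
Qed.

Definition Xf (a b t : R) := a * cos t + b * sin t.
Definition Yf (a b t : R) := a * sin t - b * cos t.

Lemma Y_shift a b t s : Yf a b (t + s) = cos s * Yf a b t + sin s * Xf a b t.
Proof. rewrite /Yf /Xf sinD cosD. ring. Qed.

Lemma XY_norm a b t : Xf a b t ^+ 2 + Yf a b t ^+ 2 = a ^+ 2 + b ^+ 2.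
Proof.
rewrite /Xf /Yf.
transitivity ((a ^+ 2 + b ^+ 2) * (cos t ^+ 2 + sin t ^+ 2)); first ring.
by rewrite cos2Dsin2 mulr1.
Qed.

Lemma X_pi a b t : Xf a b (t + pi) = - Xf a b t.
Proof. rewrite /Xf sinDpi cosDpi. ring. Qed.

Lemma Y_pi a b t : Yf a b (t + pi) = - Yf a b t.
Proof. rewrite /Yf sinDpi cosDpi. ring. Qed.

Lemma Y_2pi a b : Yf a b (pi *+ 2) = Yf a b 0.
Proof. by rewrite /Yf cos2pi sin2pi cos0 sin0. Qed.

Lemma X_cont a b : continuous (Xf a b).
Proof.
move=> x; rewrite /Xf.
apply: (@continuousD _ _ _ (fun t => a * cos t) (fun t => b * sin t)).
  apply: (@continuousM _ _ (fun=> a) cos); [exact: cst_continuous | exact: continuous_cos].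
apply: (@continuousM _ _ (fun=> b) sin); [exact: cst_continuous | exact: continuous_sin].
Qed.

Lemma cyc (y : nat -> R) n i j : y n = y 0%N -> (i <= n)%N -> (j <= n)%N ->
  y j - y i <= \sum_(k < n) Num.max 0 (y k.+1 - y k).
Proof.
move=> yn iN jN.
rewrite -(big_mkord xpredT (fun k => Num.max 0 (y k.+1 - y k))).
set g := fun k => Num.max 0 (y k.+1 - y k).
have g0 : forall k, 0 <= g k by move=> k; rewrite /g le_max lexx.
have seg : forall p q, (p <= q)%N -> y q - y p <= \sum_(p <= k < q) g k.
  move=> p q pq; rewrite -telescope_sumr //; apply: ler_sum => k _.
  by rewrite /g le_max lexx orbT.
have pos : forall p q, 0 <= \sum_(p <= k < q) g k.
  by move=> p q; apply: sumr_ge0 => k _.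
have [ij|ji] := leqP i j.
  rewrite (@big_cat_nat _ _ _ i 0%N n) ?(leq_trans ij) //=.
  rewrite (@big_cat_nat _ _ _ j i n) //=.
  have := seg _ _ ij; have := pos 0%N i; have := pos j n; lra.
rewrite (@big_cat_nat _ _ _ j 0%N n) ?(leq_trans (ltnW ji)) //=.
rewrite (@big_cat_nat _ _ _ i j n) ?(ltnW ji) //=.
have := seg _ _ (leq0n j); have := seg _ _ iN; have := pos j i.
rewrite yn; lra.
Qed.

Lemma find_k (d th : R) n : 0 < d -> 0 <= th -> th <= n%:R * d ->
  exists k, [/\ (k <= n)%N, k%:R * d <= th & th <= k%:R * d + d].
Proof.
move=> d0 th0; elim: n => [|n IH] hn.
  exists 0%N; split => //; rewrite mul0r ?add0r //; lra.
have [h|h] := leP th (n%:R * d).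
  by have [k [kn k1 k2]] := IH h; exists k; split => //; rewrite ltnW.
exists n; split => //; first lra.
by move: hn; rewrite -addn1 natrD mulrDl mul1r.
Qed.


Lemma term_bound a b m : (0 < m)%N ->
  2 * Num.sqrt (a ^+ 2 + b ^+ 2) - 4 * pi * Num.sqrt (a ^+ 2 + b ^+ 2) * (pi / m%:R)
  <= (pi / m%:R) * \sum_(k < (2 * m)%N) Num.max 0 (Xf a b (k%:R * (pi / m%:R))).
Proof.
move=> m0.
set d := pi / m%:R; set r := Num.sqrt (a ^+ 2 + b ^+ 2).
have mR : (0 : R) < m%:R by rewrite ltr0n.
have md : m%:R * d = pi by rewrite /d mulrC divfK // gt_eqF.
have d0 : 0 < d by rewrite /d divr_gt0 // pi_gt0.
have m1 : (1 : R) <= m%:R by rewrite ler1n.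
have dpi : d <= pi.
  have := @pi_gt0 R; move: md; nra.
have r0 : 0 <= r by apply: sqrtr_ge0.
have r2 : r ^+ 2 = a ^+ 2 + b ^+ 2 by rewrite sqr_sqrtr // addr_ge0 // sqr_ge0.
have Yb : forall t, - r <= Yf a b t <= r.
  move=> t; have := XY_norm a b t; rewrite -r2 => h.
  apply/andP; split; have := sqr_ge0 (Xf a b t); nra.
have sd0 : 0 <= sin d by apply: sin_ge0_pi; rewrite (ltW d0).
have sdd : sin d <= d by apply: sin_le_id; rewrite ltW.
have cd : 1 - cos d <= d ^+ 2 by apply: one_cos_le; rewrite ltW.
have cd1 := cos_le1 d.
set y := fun k : nat => Yf a b (k%:R * d).
set M := fun k : nat => Num.max 0 (Xf a b (k%:R * d)).
have step : forall k, Num.max 0 (y k.+1 - y k) <= r * d ^+ 2 + d * M k.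
  move=> k; rewrite /y /M.
  have -> : k.+1%:R * d = k%:R * d + d by rewrite -addn1 natrD mulrDl mul1r.
  rewrite Y_shift.
  set X := Xf a b (k%:R * d); set Y := Yf a b (k%:R * d).
  have M0 : 0 <= Num.max 0 X by rewrite le_max lexx.
  have MX : X <= Num.max 0 X by rewrite le_max lexx orbT.
  have := Yb (k%:R * d); rewrite -/Y => /andP[Y1 Y2].
  have h1 : 0 <= (1 - cos d) * (r + Y) by apply: mulr_ge0; lra.
  have h2 : 0 <= (d ^+ 2 - (1 - cos d)) * r by apply: mulr_ge0; lra.
  have h3 : 0 <= sin d * (Num.max 0 X - X) by apply: mulr_ge0; lra.
  have h4 : 0 <= (d - sin d) * Num.max 0 X by apply: mulr_ge0; lra.
  have h5 : 0 <= r * d ^+ 2 by apply: mulr_ge0 => //; apply: sqr_ge0.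
  have h6 : 0 <= d * Num.max 0 X by apply: mulr_ge0 => //; lra.
  rewrite ge_max; apply/andP; split; first lra.
  nra.
set PV := \sum_(k < (2 * m)%N) Num.max 0 (y k.+1 - y k).
have PVle : PV <= r * d * pi *+ 2 + d * \sum_(k < (2 * m)%N) M k.
  rewrite /PV; apply: le_trans.
    by apply: ler_sum => k _; exact: step k.
  rewrite big_split /= sumr_const card_ord -mulr_sumr.
  suff -> : r * d ^+ 2 *+ (2 * m) = r * d * pi *+ 2 by [].
  by rewrite mulnC mulrnA -mulr_natr -md; ring.
have [th thI Xth] : exists2 th, th \in `[0, pi] & Xf a b th = 0.
  apply: IVT; first exact: pi_ge0.
    by apply/continuous_subspaceT => ?; exact: X_cont.
  have -> : Xf a b pi = - Xf a b 0 by rewrite -X_pi add0r.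
  set v := Xf a b 0.
  rewrite ge_min le_max.
  have [v0|v0] := leP 0 v; apply/andP; split; apply/orP.
  - by right; lra.
  - by left; lra.
  - by left; lra.
  - by right; lra.
move: thI; rewrite in_itv /= => /andP[th0 thpi].
have Yth2 : Yf a b th ^+ 2 = r ^+ 2 by have := XY_norm a b th; rewrite Xth r2; lra.
have hth : th <= m%:R * d by rewrite md.
have [k [km k1 k2]] := find_k d0 th0 hth.
set t := th - k%:R * d.
have t0 : 0 <= t by rewrite /t; lra.
have td : t <= d by rewrite /t; lra.
have yk : y k = cos t * Yf a b th.
  rewrite /y.
  have -> : k%:R * d = th + (- t) by rewrite /t; ring.
  by rewrite Y_shift Xth cosN sinN mulr0 addr0.
have ykm : y (k + m)%N = - y k by rewrite /y natrD mulrDl md Y_pi.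
have y2m : y (2 * m)%N = y 0%N.
  by rewrite /y mul0r natrM -mulrA md -Y_2pi mulr_natl.
have i1 : (k <= 2 * m)%N by exact: (leq_trans km (leq_pmull m (isT : (0 < 2)%N))).
have i2 : (k + m <= 2 * m)%N by rewrite mul2n -addnn leq_add2r.
have c1 : y (k + m)%N - y k <= PV := cyc y2m i1 i2.
have c2 : y k - y (k + m)%N <= PV := cyc y2m i2 i1.
have ct : 1 - d ^+ 2 <= cos t.
  have := one_cos_le t0.
  have : t ^+ 2 <= d ^+ 2 by nra.
  lra.
have PVge : 2 * r * (1 - d ^+ 2) <= PV.
  rewrite ykm yk in c1 c2.
  have := Yb th; move=> /andP[Ya Yb'].
  have [Yp|Yn] := leP 0 (Yf a b th).
    have Ye : Yf a b th = r by apply/eqP; rewrite -(eqrXn2 (n := 2)) // Yth2.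
    rewrite Ye in c1 c2.
    have : 0 <= (cos t - (1 - d ^+ 2)) * r by apply: mulr_ge0; lra.
    nra.
  have Ye : Yf a b th = - r.
    by apply/eqP; rewrite -eqr_oppLR -(eqrXn2 (n := 2)) ?sqrrN ?Yth2 //; lra.
  rewrite Ye in c1 c2.
  have : 0 <= (cos t - (1 - d ^+ 2)) * r by apply: mulr_ge0; lra.
  nra.
have dd : r * d ^+ 2 <= r * pi * d.
  have : 0 <= (pi - d) * (r * d) by apply: mulr_ge0; [lra | apply: mulr_ge0 => //; lra].
  nra.
rewrite -/r -/d.
have -> : \sum_(k < (2 * m)%N) Num.max 0 (Xf a b (k%:R * d)) = \sum_(k < (2 * m)%N) M k by [].
move: PVle; rewrite mulr2n.
lra.
Qed.

End Trig.

Section Main.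
Variable R : realType.

Lemma cmodE (z : R[i]) : cmod z = Num.sqrt (Re z ^+ 2 + Im z ^+ 2).
Proof. by case: z. Qed.

Lemma cmod_ge0 (z : R[i]) : 0 <= cmod z.
Proof. by rewrite cmodE sqrtr_ge0. Qed.

Lemma ReD (x y : R[i]) : Re (x + y) = Re x + Re y.
Proof. by case: x; case: y. Qed.
Lemma ImD (x y : R[i]) : Im (x + y) = Im x + Im y.
Proof. by case: x; case: y. Qed.

Lemma cs_le (c s A B : R) : c ^+ 2 + s ^+ 2 = 1 ->
  c * A + s * B <= Num.sqrt (A ^+ 2 + B ^+ 2).
Proof.
move=> cs.
have e : (c * A + s * B) ^+ 2 + (s * A - c * B) ^+ 2 = A ^+ 2 + B ^+ 2.
  transitivity ((A ^+ 2 + B ^+ 2) * (c ^+ 2 + s ^+ 2)); first ring.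
  by rewrite cs mulr1.
apply: (le_trans (ler_norm _)); rewrite -sqrtr_sqr; apply: ler_wsqrtr.
rewrite -e lerDl; exact: sqr_ge0.
Qed.

Lemma ideal_le (N : nat) (h : 'I_N -> R[i]) :
  h_ideal h <= \sum_(i < N) cmod (h i).
Proof.
rewrite /h_ideal; apply: ge_sup.
  exists (cmod (\sum_(i < N) (fun=> 0 : R[i]) i * h i)).
  exists (fun=> 0) => // i; rewrite /cmod Normc.normc0; exact: ler01.
move=> _ [bb hb <-].
apply: (big_ind2 (fun (z : R[i]) (s : R) => cmod z <= s)).
- by rewrite /cmod Normc.normc0.
- move=> x1 x2 y1 y2 h1 h2; apply: (le_trans (le_normcD _ _)); exact: lerD.
- move=> i _; rewrite /cmod Normc.normcM.
  have := hb i; have := cmod_ge0 (h i); rewrite /cmod => h0 h1.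
  by rewrite -[X in _ <= X]mul1r ler_wpM2r.
Qed.

Lemma real_ge (N : nat) (h : 'I_N -> R[i]) (t : R) :
  \sum_(i < N) Num.max 0 (Xf (Re (h i)) (Im (h i)) t) <= h_real h.
Proof.
set bb := [ffun i => 0 < Xf (Re (h i)) (Im (h i)) t].
set z := \sum_(i < N) (bb i)%:R * h i.
have : cmod z <= h_real h.
  rewrite /h_real; exact: (le_bigmax _ (fun b : {ffun 'I_N -> bool} => cmod (\sum_(i < N) (b i)%:R * h i)) bb).
apply: le_trans.
have eRe : Re z = \sum_(i < N) (bb i)%:R * Re (h i).
  rewrite /z (big_morph (@Re R) ReD (erefl _)); apply: eq_bigr => i _.
  by case: (bb i); rewrite /= ?mul1r ?mul0r //; case: (h i).
have eIm : Im z = \sum_(i < N) (bb i)%:R * Im (h i).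
  rewrite /z (big_morph (@Im R) ImD (erefl _)); apply: eq_bigr => i _.
  by case: (bb i); rewrite /= ?mul1r ?mul0r //; case: (h i).
have -> : \sum_(i < N) Num.max 0 (Xf (Re (h i)) (Im (h i)) t)
   = cos t * Re z + sin t * Im z.
  rewrite eRe eIm !mulr_sumr -big_split /=; apply: eq_bigr => i _.
  rewrite /bb ffunE -/(Xf (Re (h i)) (Im (h i)) t).
  have [hx|hx] := ltP 0 (Xf (Re (h i)) (Im (h i)) t).
    rewrite /Xf /=; ring.
  rewrite /Xf /=; ring.
rewrite cmodE; apply: cs_le; exact: cos2Dsin2.
Qed.

End Main.

Theorem theorem2 (R : realType) (N : nat) (h : 'I_N -> R[i]) :
  h_ideal h / pi <= h_real h.
Proof.
set S := \sum_(i < N) cmod (h i).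
set Hr := h_real h.
have S0 : 0 <= S by apply: sumr_ge0 => i _; exact: cmod_ge0.
have key : forall m, (0 < m)%N -> S - 2 * pi * (pi / m%:R) * S <= pi * Hr.
  move=> m m0.
  have mR : (0 : R) < m%:R by rewrite ltr0n.
  have md : (pi : R) / m%:R * m%:R = pi by rewrite divfK // gt_eqF.
  have d0 : 0 <= (pi : R) / m%:R by rewrite divr_ge0 // ?pi_ge0 // ltW.
  set d := pi / m%:R in md d0 *.
  set M := fun (i : 'I_N) (k : 'I_(2 * m)) => Num.max 0 (Xf (Re (h i)) (Im (h i)) (k%:R * d)).
  have sum1 : \sum_(i < N) (2 * cmod (h i) - 4 * pi * cmod (h i) * d)
      <= \sum_(i < N) (d * \sum_(k < (2 * m)%N) M i k).
    apply: ler_sum => i _; rewrite cmodE; exact: (term_bound (Re (h i)) (Im (h i)) m0).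
  have lhs : \sum_(i < N) (2 * cmod (h i) - 4 * pi * cmod (h i) * d)
      = 2 * S - 4 * pi * d * S.
    rewrite (eq_bigr (fun i => 2 * cmod (h i) - (4 * pi * d) * cmod (h i))); last first.
      by move=> i _; ring.
    by rewrite sumrB -!mulr_sumr.
  have rhs : \sum_(i < N) (d * \sum_(k < (2 * m)%N) M i k)
      = d * \sum_(k < (2 * m)%N) \sum_(i < N) M i k.
    by rewrite -mulr_sumr exchange_big.
  have bnd : \sum_(k < (2 * m)%N) \sum_(i < N) M i k <= Hr *+ (2 * m).
    have -> : Hr *+ (2 * m) = \sum_(k < (2 * m)%N) Hr by rewrite sumr_const card_ord.
    apply: ler_sum => k _; exact: real_ge.
  have bnd2 : d * \sum_(k < (2 * m)%N) \sum_(i < N) M i k <= d * (Hr *+ (2 * m)).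
    exact: ler_wpM2l.
  have e2 : d * (Hr *+ (2 * m)) = 2 * pi * Hr.
    have -> : Hr *+ (2 * m) = Hr * (2%:R * m%:R) by rewrite -natrM mulr_natr.
    by rewrite -md; ring.
  move: sum1; rewrite lhs rhs => sum1.
  lra.
have SHr : S <= pi * Hr.
  rewrite leNgt; apply/negP => hlt.
  set e := S - pi * Hr.
  have e0 : 0 < e by rewrite /e subr_gt0.
  set m := (Num.trunc (2 * pi * pi * S / e)).+1.
  have hm : 2 * pi * pi * S / e < m%:R by exact: truncnS_gt.
  have mR : (0 : R) < m%:R by rewrite ltr0n.
  have := key m isT.
  have md : (pi : R) / m%:R * m%:R = pi by rewrite divfK // gt_eqF.
  move: hm; rewrite ltr_pdivrMr // => hm.
  set q := pi / m%:R in md *.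
  move=> hk.
  have : e * m%:R <= 2 * pi * q * S * m%:R.
    by apply: ler_wpM2r; [exact: ltW | rewrite /e; lra].
  have -> : 2 * pi * q * S * m%:R = 2 * pi * pi * S by rewrite -md; ring.
  lra.
have hid := ideal_le h.
rewrite ler_pdivrMr ?pi_gt0 //.
have := @pi_gt0 R.
rewrite -/S in hid.
nra.
Qed.
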